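(* Let $\sigma>0$, $a>0$, $m\in\mathbb R$, and $u_0(x)=\sqrt{\frac{a}{2\pi}}e^{-\frac a2(x-m)^2}$. Then the solution $u$ of $$\partial_t u=\sigma^2\partial_{xx}u+\Big(-x^2+\int_{\mathbb R}y^2u(t,y)\,dy\Big)u,\quad t>0,\ x\in\mathbb R,\qquad u(0,\cdot)=u_0,$$ remains Gaussian for $t>0$ and is given by $$u(t,x)=\sqrt{\frac{a(t)}{2\pi}}e^{-\frac{a(t)}{2}(x-m(t))^2},\quad a(t):=\frac{a\sigma+\tanh(2\sigma t)}{\sigma(1+a\sigma\tanh(2\sigma t))},\quad m(t):=\frac{ma\sigma}{a\sigma\cosh(2\sigma t)+\sinh(2\sigma t)}.$$
   Context: The solution is the unique solution in $C(\mathbb R_+;L^1(\mathbb R))\cap L^1_{\rm loc}((0,\infty);\{g\in L^1(\mathbb R):\int x^2|g|<\infty\})$. *)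

(* Defs.v *)
From Stdlib Require Export Reals.
From Coquelicot Require Export Coquelicot.
Open Scope R_scope.

Definition gauss (a m x : R) : R :=
  sqrt (a / (2 * PI)) * exp (- (a / 2) * (x - m) ^ 2).

Definition a_of (sigma a t : R) : R :=
  (a * sigma + tanh (2 * sigma * t)) / (sigma * (1 + a * sigma * tanh (2 * sigma * t))).
Definition m_of (sigma a m t : R) : R :=
  (m * a * sigma) / (a * sigma * cosh (2 * sigma * t) + sinh (2 * sigma * t)).

Definition u_sol (sigma a m t x : R) : R := gauss (a_of sigma a t) (m_of sigma a m t) x.

(* Main.v *)
Require Import Defs.
From Stdlib Require Import Reals.
From Coquelicot Require Import Coquelicot.
From Stdlib Require Import Lra Classical_Prop.
Open Scope R_scope.


Lemma ball_R (y e z : R) : ball y e z <-> Rabs (z - y) < e.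
Proof. reflexivity. Qed.

Lemma mono_lim_p (F : R -> R) (B : R) :
  (forall x y, x <= y -> F x <= F y) -> (forall x, F x <= B) ->
  exists l, filterlim F (Rbar_locally p_infty) (locally l).
Proof.
  intros Hm Hb.
  destruct (completeness (fun v => exists x, v = F x)) as [l [Hub Hlub]].
  - exists B. intros v [x ->]. apply Hb.
  - exists (F 0). exists 0. reflexivity.
  - exists l. apply filterlim_locally. intros eps.
    assert (H: exists x0, l - eps < F x0).
    { destruct (Classical_Prop.classic (exists x0, l - eps < F x0)) as [H|H]; auto.
      exfalso. assert (l <= l - eps).
      { apply Hlub. intros v [x ->]. apply Rnot_lt_le. intro. apply H. exists x. auto. }
      destruct eps; simpl in *; lra. }
    destruct H as [x0 Hx0]. exists x0. intros x Hx. apply ball_R.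
    assert (F x <= l) by (apply Hub; exists x; auto).
    assert (F x0 <= F x) by (apply Hm; lra).
    apply Rabs_def1; lra.
Qed.

Lemma mono_lim_m (F : R -> R) (B : R) :
  (forall x y, x <= y -> F x <= F y) -> (forall x, B <= F x) ->
  exists l, filterlim F (Rbar_locally m_infty) (locally l).
Proof.
  intros Hm Hb.
  destruct (completeness (fun v => exists x, v = - F x)) as [l [Hub Hlub]].
  - exists (-B). intros v [x ->]. specialize (Hb x). lra.
  - exists (- F 0). exists 0. reflexivity.
  - exists (-l). apply filterlim_locally. intros eps.
    assert (H: exists x0, l - eps < - F x0).
    { destruct (Classical_Prop.classic (exists x0, l - eps < - F x0)) as [H|H]; auto.
      exfalso. assert (l <= l - eps).
      { apply Hlub. intros v [x ->]. apply Rnot_lt_le. intro. apply H. exists x. auto. }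
      destruct eps; simpl in *; lra. }
    destruct H as [x0 Hx0]. exists x0. intros x Hx. apply ball_R.
    assert (- F x <= l) by (apply Hub; exists x; auto).
    assert (F x <= F x0) by (apply Hm; lra).
    apply Rabs_def1; lra.
Qed.

Lemma is_RInt_gen_bound (g : R -> R) (L : R) :
  (forall x, continuous g x) -> (forall x, 0 <= g x) ->
  is_RInt_gen g (Rbar_locally m_infty) (Rbar_locally p_infty) L ->
  forall a b, a <= b -> RInt g a b <= L.
Proof.
  intros Hc Hp H a b Hab.
  apply Rnot_lt_le. intro Hlt.
  assert (Hd : 0 < RInt g a b - L) by lra.
  specialize (H (ball L (mkposreal _ Hd)) (locally_ball L (mkposreal _ Hd))).
  destruct H as [Q1 Q2 [M1 HQ1] [M2 HQ2] Himp].
  set (a' := Rmin a (M1 - 1)). set (b' := Rmax b (M2 + 1)).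
  assert (Q1 a') by (apply HQ1; unfold a'; generalize (Rmin_r a (M1-1)); lra).
  assert (Q2 b') by (apply HQ2; unfold b'; generalize (Rmax_r b (M2+1)); lra).
  destruct (Himp a' b' H H0) as [y [Hy Hb]].
  simpl in Hy. apply ball_R in Hb. simpl in Hb.
  assert (Ha' : a' <= a) by (unfold a'; apply Rmin_l).
  assert (Hb' : b <= b') by (unfold b'; apply Rmax_l).
  assert (Hex : forall u v, ex_RInt g u v) by (intros; apply (ex_RInt_continuous (V:=R_CompleteNormedModule)); auto).
  rewrite <- (is_RInt_unique _ _ _ _ Hy) in Hb.
  rewrite <- (RInt_Chasles g a' a b') in Hb by auto.
  rewrite <- (RInt_Chasles g a b b') in Hb by auto.
  assert (0 <= RInt g a' a) by (apply RInt_ge_0; auto).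
  assert (0 <= RInt g b b') by (apply RInt_ge_0; auto).
  apply Rabs_def2 in Hb. unfold minus, plus, opp in Hb; simpl in Hb. lra.
Qed.

Arguments exp : simpl never.
Arguments sqrt : simpl never.
Arguments Rabs : simpl never.
Arguments atan : simpl never.
Arguments RInt : simpl never.
Arguments Derive : simpl never.
Ltac req := match goal with |- @eq _ ?a ?b => change (@eq R a b) end.
Ltac rs := unfold minus, plus, opp, scal, mult, zero, one in *; simpl in *; unfold mult, plus, zero, one in *; simpl in *.

Lemma exc (f : R -> R) a b : (forall x, continuous f x) -> ex_RInt f a b.
Proof. intros; apply (ex_RInt_continuous (V:=R_CompleteNormedModule)); auto. Qed.

Lemma prod_all (P : R * R -> Prop) Fa Fb {FFa : Filter Fa} {FFb : Filter Fb} :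
  (forall ab, P ab) -> filter_prod Fa Fb P.
Proof. intros H. apply filter_forall. exact H. Qed.

Lemma antideriv_gen (f F : R -> R) la lb :
  (forall x, is_derive F x (f x)) -> (forall x, continuous f x) ->
  filterlim F (Rbar_locally m_infty) (locally la) ->
  filterlim F (Rbar_locally p_infty) (locally lb) ->
  is_RInt_gen f (Rbar_locally m_infty) (Rbar_locally p_infty) (lb - la).
Proof.
  intros Hd Hc Hla Hlb.
  assert (HD : forall x, Derive F x = f x) by (intros; apply is_derive_unique; auto).
  apply (is_RInt_gen_ext (Derive F)).
  { apply prod_all; [apply Rbar_locally_filter..|]. intros ab x _. auto. }
  apply is_RInt_gen_Derive; auto.
  - apply prod_all; [apply Rbar_locally_filter..|]. intros ab x _. eexists; eauto.
  - apply prod_all; [apply Rbar_locally_filter..|]. intros ab x _. apply (continuous_ext f). intros; auto. auto.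
Qed.

Lemma RInt_prim (f : R -> R) : (forall x, continuous f x) ->
  forall x, is_derive (fun y => RInt f 0 y) x (f x).
Proof.
  intros Hc x. apply (is_derive_RInt (V:=R_NormedModule) f (fun y => RInt f 0 y) 0 x); auto.
  apply filter_forall. intros. apply (RInt_correct (V:=R_CompleteNormedModule)). apply exc; auto.
Qed.

Lemma ex_RInt_gen_cmp (f g : R -> R) (L : R) :
  (forall x, continuous f x) -> (forall x, continuous g x) ->
  (forall x, 0 <= f x <= g x) ->
  is_RInt_gen g (Rbar_locally m_infty) (Rbar_locally p_infty) L ->
  ex_RInt_gen f (Rbar_locally m_infty) (Rbar_locally p_infty).
Proof.
  intros Hcf Hcg Hfg HL.
  assert (Hg0 : forall x, 0 <= g x) by (intros x; destruct (Hfg x); lra).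
  assert (HB := is_RInt_gen_bound g L Hcg Hg0 HL).
  set (F := fun y => RInt f 0 y).
  assert (Hf : forall a b, ex_RInt f a b) by (intros; apply exc; auto).
  assert (Hg : forall a b, ex_RInt g a b) by (intros; apply exc; auto).
  assert (Hpos : forall a b, a <= b -> 0 <= RInt f a b <= RInt g a b).
  { intros a b Hab. split. apply RInt_ge_0; auto. intros x _; apply Hfg.
    apply RInt_le; auto. intros x _; apply Hfg. }
  assert (Hmono : forall x y, x <= y -> F x <= F y).
  { intros x y Hxy. unfold F. rewrite <- (RInt_Chasles f 0 x y) by auto. rs.
    destruct (Hpos x y Hxy). lra. }
  assert (Hbd : forall x, - L <= F x <= L).
  { intros x. unfold F. destruct (Rle_or_lt 0 x) as [Hx|Hx].
    - destruct (Hpos 0 x Hx). specialize (HB 0 x Hx). split; lra.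
    - rewrite <- opp_RInt_swap by auto. rs. destruct (Hpos x 0 (Rlt_le _ _ Hx)).
      specialize (HB x 0 (Rlt_le _ _ Hx)). split; lra. }
  destruct (mono_lim_p F L Hmono (fun x => proj2 (Hbd x))) as [lb Hlb].
  destruct (mono_lim_m F (-L) Hmono (fun x => proj1 (Hbd x))) as [la Hla].
  exists (lb - la). apply (antideriv_gen f F); auto.
  apply RInt_prim; auto.
Qed.

Ltac exp_norm := repeat match goal with |- context[exp ?a] => match goal with |- context[exp ?b] =>
  assert_fails (constr_eq a b); replace (exp a) with (exp b) by (f_equal; ring) end end.

Definition gfun (z : R) := exp (- z ^ 2).
Definition Phi (t : R) := RInt gfun 0 t.
Definition Hf (u y : R) := exp (- (u ^ 2) * (1 + y ^ 2)) / (1 + y ^ 2).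
Definition Hh (t : R) := RInt (fun y => Hf t y) 0 1.

Lemma cont_ge x : continuous gfun x.
Proof. apply (ex_derive_continuous gfun). unfold gfun. auto_derive. auto. Qed.

Lemma Phi_deriv x : is_derive Phi x (gfun x).
Proof. apply RInt_prim. apply cont_ge. Qed.

Lemma pos1y (y : R) : 0 < 1 + y ^ 2.
Proof. nra. Qed.

Lemma Hf_deriv u y : is_derive (fun u => Hf u y) u (-2 * u * exp (- (u ^ 2) * (1 + y ^ 2))).
Proof.
  unfold Hf. auto_derive. generalize (pos1y y); intros; lra.
  exp_norm. field. generalize (pos1y y); intros; lra.
Qed.

Lemma cont_Hf u y : continuous (fun y => Hf u y) y.
Proof. apply (ex_derive_continuous (fun y => Hf u y)). unfold Hf. auto_derive.
  generalize (pos1y y); intros; lra. Qed.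

Lemma cpexp x : continuity_pt exp x.
Proof. apply derivable_continuous_pt. apply derivable_pt_exp. Qed.

Lemma Hh_deriv t : is_derive Hh t (RInt (fun y => -2 * t * exp (- (t ^ 2) * (1 + y ^ 2))) 0 1).
Proof.
  assert (E : RInt (fun y => -2 * t * exp (- (t ^ 2) * (1 + y ^ 2))) 0 1 =
              RInt (fun y => Derive (fun u => Hf u y) t) 0 1).
  { apply RInt_ext. intros y _. symmetry. apply is_derive_unique. apply Hf_deriv. }
  rewrite E. unfold Hh.
  apply (is_derive_RInt_param Hf 0 1 t).
  - apply filter_forall. intros x y _. eexists. apply Hf_deriv.
  - intros y _. 
    apply continuity_2d_pt_ext with (f := fun u v => (-2 * u) * exp (- (u * u) * (1 + v * v))).
    { intros u v. cbv beta. symmetry. apply is_derive_unique.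
      replace (-2 * u * exp (- (u * u) * (1 + v * v))) with (-2 * u * exp (- (u ^ 2) * (1 + v ^ 2))) by (f_equal; f_equal; ring).
      apply Hf_deriv. }
    apply continuity_2d_pt_mult.
    + apply continuity_2d_pt_mult. apply continuity_2d_pt_const. apply continuity_2d_pt_id1.
    + apply continuity_1d_2d_pt_comp. apply cpexp.
      apply continuity_2d_pt_mult.
      * apply continuity_2d_pt_opp. apply continuity_2d_pt_mult; apply continuity_2d_pt_id1.
      * apply continuity_2d_pt_plus. apply continuity_2d_pt_const.
        apply continuity_2d_pt_mult; apply continuity_2d_pt_id2.
  - apply filter_forall. intros x. apply exc. intros; apply cont_Hf.
Qed.

Lemma Hh_deriv_val t : RInt (fun y => -2 * t * exp (- (t ^ 2) * (1 + y ^ 2))) 0 1 = -2 * gfun t * Phi t.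
Proof.
  set (h := fun x => scal (exp (- t ^ 2)) (gfun x)).
  assert (C : forall x, continuous h x).
  { intros x. apply (ex_derive_continuous h). unfold h, gfun; rs. auto_derive. auto. }
  transitivity (RInt (fun y => scal (-2) (scal t (h (t * y + 0)))) 0 1).
  { apply RInt_ext. intros y _. unfold h. rs. unfold gfun. rewrite <- exp_plus. exp_norm. ring. }
  transitivity (scal (-2) (RInt (fun y => scal t (h (t * y + 0))) 0 1)).
  { apply (RInt_scal (V:=R_CompleteNormedModule)). apply (ex_RInt_comp_lin (V:=R_NormedModule)). apply exc. exact C. }
  transitivity (scal (-2) (RInt h (t * 0 + 0) (t * 1 + 0))).
  { f_equal. apply (RInt_comp_lin (V:=R_CompleteNormedModule)). apply exc. exact C. }
  transitivity (scal (-2) (scal (exp (- t ^ 2)) (RInt gfun (t * 0 + 0) (t * 1 + 0)))).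
  { f_equal. apply (RInt_scal (V:=R_CompleteNormedModule)). apply exc. intros; apply cont_ge. }
  replace (t * 0 + 0) with 0 by ring. replace (t * 1 + 0) with t by ring.
  unfold Phi, gfun. rs. ring.
Qed.

Lemma K_deriv t : is_derive (fun t => Phi t ^ 2 + Hh t) t 0.
Proof.
  replace 0 with (INR 2 * gfun t * Phi t ^ Init.Nat.pred 2 + (-2 * gfun t * Phi t)) by (simpl; ring).
  rewrite <- Hh_deriv_val.
  apply (is_derive_plus (fun t => Phi t ^ 2) Hh).
  - apply (is_derive_pow Phi 2 t (gfun t)). apply Phi_deriv.
  - apply Hh_deriv.
Qed.

Lemma const_of_deriv0 (K : R -> R) : (forall t, is_derive K t 0) -> forall t, K t = K 0.
Proof.
  intros HK t.
  assert (H1 := is_RInt_derive (V:=R_CompleteNormedModule) K (fun _ => 0) 0 t (fun x _ => HK x) (fun x _ => continuous_const _ x)).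
  assert (H2 := is_RInt_const (V:=R_NormedModule) 0 t 0).
  assert (E := is_RInt_unique _ _ _ _ H1). rewrite (is_RInt_unique _ _ _ _ H2) in E.
  rs. lra.
Qed.

Lemma Hh0 : Hh 0 = PI / 4.
Proof.
  unfold Hh, Hf.
  rewrite (RInt_ext _ (fun y => / (1 + y ^ 2))).
  2:{ intros y _. replace (- (0 ^ 2) * (1 + y ^ 2)) with 0 by ring. rewrite exp_0. req. field. generalize (pos1y y); lra. }
  assert (H := is_RInt_derive (V:=R_CompleteNormedModule) atan (fun y => / (1 + y ^ 2)) 0 1).
  assert (H1 : forall x : R, Rmin 0 1 <= x <= Rmax 0 1 -> is_derive atan x ((fun y : R => / (1 + y ^ 2)) x)).
  { intros x _. apply is_derive_Reals. apply derivable_pt_lim_atan. }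
  assert (H2 : forall x : R, Rmin 0 1 <= x <= Rmax 0 1 -> continuous (fun y : R => / (1 + y ^ 2)) x).
  2:{ rewrite (is_RInt_unique _ _ _ _ (H H1 H2)). rs. rewrite atan_1, atan_0. req. field. }
  intros x _. apply (ex_derive_continuous (fun y => / (1 + y ^ 2))). auto_derive. generalize (pos1y x); lra.
Qed.

Lemma Hh_bound t : 0 <= Hh t <= exp (- t ^ 2).
Proof.
  assert (Hex : ex_RInt (fun y => Hf t y) 0 1) by (apply exc; intros; apply cont_Hf).
  split.
  - apply RInt_ge_0; auto. lra. intros y _. unfold Hf. apply Rdiv_le_0_compat.
    apply Rlt_le, exp_pos. apply pos1y.
  - unfold Hh. replace (exp (- t ^ 2)) with (RInt (fun _ => exp (- t ^ 2)) 0 1).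
    2:{ rewrite (RInt_const (V:=R_CompleteNormedModule)). rs. ring. }
    apply RInt_le; auto. lra. apply exc; intros; apply continuous_const.
    intros y [Hy0 Hy1]. unfold Hf.
    assert (A : exp (- (t ^ 2) * (1 + y ^ 2)) <= exp (- t ^ 2)).
    { destruct (Req_dec (- (t ^ 2) * (1 + y ^ 2)) (- t ^ 2)) as [E|E]. rewrite E; lra.
      apply Rlt_le, exp_increasing. assert (0 <= t^2 * y^2) by (apply Rmult_le_pos; apply pow2_ge_0). nra. }
    assert (B : 1 <= 1 + y ^ 2) by (generalize (pow2_ge_0 y); lra).
    assert (0 < exp (- (t ^ 2) * (1 + y ^ 2))) by apply exp_pos.
    unfold Rdiv. apply Rle_trans with (exp (- (t ^ 2) * (1 + y ^ 2)) * 1); [|lra].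
    apply Rmult_le_compat_l. lra. rewrite <- Rinv_1. apply Rinv_le_contravar; lra.
Qed.

Lemma lim_p (f : R -> R) l C : (forall x, 1 <= x -> Rabs (f x - l) <= C / x) ->
  filterlim f (Rbar_locally p_infty) (locally l).
Proof.
  intros H. apply filterlim_locally. intros [eps Heps]. simpl.
  exists (Rmax 1 (Rabs C / eps)). intros x Hx. apply ball_R.
  assert (H1 : 1 < x) by (generalize (Rmax_l 1 (Rabs C / eps)); lra).
  assert (H2 : Rabs C / eps < x) by (generalize (Rmax_r 1 (Rabs C / eps)); lra).
  assert (H3 : Rabs C < x * eps).
  { apply Rmult_lt_compat_r with (r := eps) in H2; auto. unfold Rdiv in H2.
    rewrite Rmult_assoc, Rinv_l, Rmult_1_r in H2; lra. }
  specialize (H x (Rlt_le _ _ H1)).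
  assert (E : C / x * x = C) by (field; lra).
  assert (C <= Rabs C) by apply Rle_abs.
  set (q := C / x) in *. nra.
Qed.

Lemma lim_m (f : R -> R) l C : (forall x, x <= -1 -> Rabs (f x - l) <= C / (- x)) ->
  filterlim f (Rbar_locally m_infty) (locally l).
Proof.
  intros H. apply filterlim_locally. intros [eps Heps]. simpl.
  exists (- Rmax 1 (Rabs C / eps)). intros x Hx. apply ball_R.
  assert (H1 : 1 < -x) by (generalize (Rmax_l 1 (Rabs C / eps)); lra).
  assert (H2 : Rabs C / eps < -x) by (generalize (Rmax_r 1 (Rabs C / eps)); lra).
  assert (H3 : Rabs C < (-x) * eps).
  { apply Rmult_lt_compat_r with (r := eps) in H2; auto. unfold Rdiv in H2.
    rewrite Rmult_assoc, Rinv_l, Rmult_1_r in H2; lra. }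
  specialize (H x ltac:(lra)).
  assert (E : C / (-x) * (-x) = C) by (field; lra).
  assert (C <= Rabs C) by apply Rle_abs.
  set (q := C / (-x)) in *. nra.
Qed.

Lemma exp_sq_ge x : x ^ 2 < exp (x ^ 2).
Proof. generalize (exp_ineq1_le (x ^ 2)). lra. Qed.

Lemma ge_bound x : 1 <= Rabs x -> gfun x <= / Rabs x.
Proof.
  intros H. unfold gfun. rewrite exp_Ropp. apply Rinv_le_contravar. lra.
  generalize (exp_sq_ge x). rewrite <- (Rsqr_abs x) at 1 || idtac.
  replace (x ^ 2) with (Rabs x * Rabs x). 2:{ rewrite <- Rabs_mult. rewrite Rabs_right. ring. nra. }
  intros. nra.
Qed.

Lemma xge_bound x : 1 <= Rabs x -> Rabs x * gfun x <= / Rabs x.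
Proof.
  intros H. unfold gfun. rewrite exp_Ropp.
  assert (E : x ^ 2 = Rabs x * Rabs x) by (rewrite <- Rabs_mult; rewrite Rabs_right; [ring|nra]).
  generalize (exp_sq_ge x). rewrite E. intros Hx.
  assert (0 < exp (Rabs x * Rabs x)) by apply exp_pos.
  apply Rmult_le_reg_r with (r := exp (Rabs x * Rabs x) * Rabs x). nra.
  replace (Rabs x * / exp (Rabs x * Rabs x) * (exp (Rabs x * Rabs x) * Rabs x)) with (Rabs x * Rabs x) by (field; lra).
  replace (/ Rabs x * (exp (Rabs x * Rabs x) * Rabs x)) with (exp (Rabs x * Rabs x)) by (field; lra).
  lra.
Qed.

Lemma Phi0 : Phi 0 = 0.
Proof. unfold Phi. apply (RInt_point (V:=R_CompleteNormedModule)). Qed.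

Lemma Phi_sq t : Phi t ^ 2 = PI / 4 - Hh t.
Proof.
  assert (H := const_of_deriv0 (fun t => Phi t ^ 2 + Hh t) K_deriv t). simpl in H.
  rewrite Phi0, Hh0 in H. lra.
Qed.

Lemma Phi_nonneg t : 0 <= t -> 0 <= Phi t.
Proof. intros. unfold Phi. apply RInt_ge_0; auto. apply exc; intros; apply cont_ge.
  intros; apply Rlt_le, exp_pos. Qed.

Lemma Phi_odd t : Phi (- t) = - Phi t.
Proof.
  unfold Phi.
  assert (H := is_RInt_comp_opp (V:=R_NormedModule) gfun 0 t (RInt gfun (-0) (-t))).
  assert (Hex : forall a b, ex_RInt gfun a b) by (intros; apply exc; intros; apply cont_ge).
  specialize (H (RInt_correct _ _ _ (Hex _ _))).
  replace (-0) with 0 in H by ring.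
  rewrite <- (is_RInt_unique _ _ _ _ H).
  rewrite (RInt_ext _ (fun y => - gfun y)).
  2:{ intros x _. rs. unfold gfun. req. f_equal. f_equal. f_equal. ring. }
  rewrite (RInt_opp (V:=R_CompleteNormedModule)) by auto. rs. reflexivity.
Qed.

Definition sg := sqrt PI / 2.
Lemma sg_pos : 0 < sg.
Proof. unfold sg. generalize (sqrt_lt_R0 PI PI_RGT_0). lra. Qed.
Lemma sg_sq : sg ^ 2 = PI / 4.
Proof. unfold sg. simpl. replace (sqrt PI / 2 * (sqrt PI / 2 * 1)) with (sqrt PI * sqrt PI / 4) by field.
  rewrite sqrt_sqrt. auto. generalize PI_RGT_0; lra. Qed.

Lemma Phi_bound_p t : 1 <= t -> Rabs (Phi t - sg) <= / sg / t.
Proof.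
  intros Ht. assert (Hp := Phi_nonneg t ltac:(lra)). assert (Hs := sg_pos).
  assert (Hq := Phi_sq t). rewrite <- sg_sq in Hq. assert (Hb := Hh_bound t).
  assert (Hg := ge_bound t). rewrite Rabs_right in Hg by lra. specialize (Hg ltac:(lra)).
  unfold gfun in Hg. set (p := Phi t) in *. set (h := Hh t) in *.
  assert (p <= sg) by nra.
  rewrite Rabs_left1 by lra.
  assert (E1 : (sg - p) * sg <= / t) by nra.
  assert (E2 : / sg / t = / t / sg) by (field; lra).
  rewrite E2. apply Rmult_le_reg_r with sg; auto. unfold Rdiv at 1. rewrite Rmult_assoc, Rinv_l by lra. lra.
Qed.

Lemma Phi_lim_p : filterlim Phi (Rbar_locally p_infty) (locally sg).
Proof. apply lim_p with (C := / sg). apply Phi_bound_p. Qed.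

Lemma Phi_lim_m : filterlim Phi (Rbar_locally m_infty) (locally (- sg)).
Proof.
  apply lim_m with (C := / sg). intros x Hx.
  replace (Phi x - - sg) with (- (Phi (- x) - sg)).
  2:{ Show. replace (Phi x) with (Phi (- - x)) by (rewrite Ropp_involutive; auto). rewrite (Phi_odd (-x)). ring. }
  rewrite Rabs_Ropp. apply Phi_bound_p. lra.
Qed.

Definition kk A := sqrt (A / 2).
Definition cc A := sqrt (A / (2 * PI)).

Lemma kk_pos A : 0 < A -> 0 < kk A.
Proof. intros; unfold kk; apply sqrt_lt_R0; lra. Qed.
Lemma cc_pos A : 0 < A -> 0 < cc A.
Proof. intros; unfold cc; apply sqrt_lt_R0. generalize PI_RGT_0; intros. apply Rdiv_lt_0_compat; lra. Qed.
Lemma kk_sq A : 0 < A -> kk A * kk A = A / 2.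
Proof. intros; unfold kk; apply sqrt_sqrt; lra. Qed.
Lemma cc_kk A : 0 < A -> cc A = / sqrt PI * kk A.
Proof. intros. unfold cc, kk. replace (A / (2 * PI)) with ((A / 2) / PI) by (field; generalize PI_RGT_0; lra).
  rewrite sqrt_div_alt by apply PI_RGT_0. field. generalize (sqrt_lt_R0 PI PI_RGT_0); lra. Qed.

Lemma gauss_eq A m x : 0 < A -> gauss A m x = cc A * gfun (kk A * (x - m)).
Proof. intros HA. unfold gauss, gfun. fold (cc A). f_equal. f_equal.
  replace ((kk A * (x - m)) ^ 2) with ((kk A * kk A) * (x - m) ^ 2) by ring. rewrite kk_sq; auto. ring. Qed.

Lemma gauss_pos A m x : 0 < A -> 0 < gauss A m x.
Proof. intros. rewrite gauss_eq; auto. apply Rmult_lt_0_compat. apply cc_pos; auto. apply exp_pos. Qed.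

Lemma gauss_dx A m x : is_derive (gauss A m) x (- A * (x - m) * gauss A m x).
Proof. unfold gauss. auto_derive. auto. req. exp_norm. field. Qed.

Lemma cont_gauss A m x : continuous (gauss A m) x.
Proof. apply (ex_derive_continuous (K:=R_AbsRing) (V:=R_NormedModule) (gauss A m)). eexists. apply gauss_dx. Qed.

Lemma deriv_eq (f : R -> R) x l l' : is_derive f x l -> l = l' -> is_derive f x l'.
Proof. intros H ->; auto. Qed.

Definition Pg A m x := / sqrt PI * Phi (kk A * (x - m)).

Lemma Pg_deriv A m x : 0 < A -> is_derive (Pg A m) x (gauss A m x).
Proof.
  intros HA. unfold Pg. apply deriv_eq with (/ sqrt PI * (kk A * gfun (kk A * (x - m)))).
  - apply is_derive_scal.
    apply (is_derive_comp Phi (fun x => kk A * (x - m)) x). apply Phi_deriv.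
    auto_derive; [auto | req; ring].
  - rewrite gauss_eq by auto. rewrite cc_kk by auto. req. ring.
Qed.

Lemma lin_p k m : 0 < k -> is_lim (fun x => k * (x - m)) p_infty p_infty.
Proof.
  intros Hk P [M HM]. exists (M / k + m). intros x Hx. apply HM.
  apply Rmult_lt_compat_l with (r := k) in Hx; auto.
  replace (k * (M / k + m)) with (M + k * m) in Hx by (field; lra). nra.
Qed.
Lemma lin_m k m : 0 < k -> is_lim (fun x => k * (x - m)) m_infty m_infty.
Proof.
  intros Hk P [M HM]. exists (M / k + m). intros x Hx. apply HM.
  apply Rmult_lt_compat_l with (r := k) in Hx; auto.
  replace (k * (M / k + m)) with (M + k * m) in Hx by (field; lra). nra.
Qed.

Lemma comp_p (q : R -> R) l k m : 0 < k -> is_lim q p_infty l -> is_lim (fun x => q (k * (x - m))) p_infty l.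
Proof. intros Hk H. eapply is_lim_comp. exact H. apply lin_p; auto. exists 0. intros; discriminate. Qed.
Lemma comp_m (q : R -> R) l k m : 0 < k -> is_lim q m_infty l -> is_lim (fun x => q (k * (x - m))) m_infty l.
Proof. intros Hk H. eapply is_lim_comp. exact H. apply lin_m; auto. exists 0. intros; discriminate. Qed.

Lemma ge_lim_p : is_lim gfun p_infty 0.
Proof. apply (lim_p gfun 0 1). intros x Hx. rewrite Rminus_0_r. rewrite Rabs_right.
  2:{ apply Rle_ge, Rlt_le, exp_pos. }
  assert (H := ge_bound x). rewrite Rabs_right in H by lra. unfold Rdiv. rewrite Rmult_1_l. apply H. lra. Qed.
Lemma ge_lim_m : is_lim gfun m_infty 0.
Proof. apply (lim_m gfun 0 1). intros x Hx. rewrite Rminus_0_r. rewrite Rabs_right.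
  2:{ apply Rle_ge, Rlt_le, exp_pos. }
  assert (H := ge_bound x). rewrite Rabs_left in H by lra. unfold Rdiv. rewrite Rmult_1_l. apply H. lra. Qed.
Lemma xge_lim_p : is_lim (fun x => x * gfun x) p_infty 0.
Proof. apply (lim_p _ 0 1). intros x Hx. rewrite Rminus_0_r. rewrite Rabs_mult.
  rewrite (Rabs_right (gfun x)). 2:{ apply Rle_ge, Rlt_le, exp_pos. }
  assert (H := xge_bound x). rewrite Rabs_right in * by lra. unfold Rdiv. rewrite Rmult_1_l. apply H. lra. Qed.
Lemma xge_lim_m : is_lim (fun x => x * gfun x) m_infty 0.
Proof. apply (lim_m _ 0 1). intros x Hx. rewrite Rminus_0_r. rewrite Rabs_mult.
  rewrite (Rabs_right (gfun x)). 2:{ apply Rle_ge, Rlt_le, exp_pos. }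
  assert (H := xge_bound x). rewrite Rabs_left in * by lra. unfold Rdiv. rewrite Rmult_1_l. apply H. lra. Qed.

Lemma lim_fin (f : R -> R) (x : Rbar) (l l' : R) : is_lim f x l -> l = l' -> filterlim f (Rbar_locally x) (locally l').
Proof. intros H <-. destruct x; [|exact H|exact H].
  Abort.

Lemma lim_fin_p (f : R -> R) (l l' : R) : is_lim f p_infty l -> l = l' -> filterlim f (Rbar_locally p_infty) (locally l').
Proof. intros H <-. exact H. Qed.
Lemma lim_fin_m (f : R -> R) (l l' : R) : is_lim f m_infty l -> l = l' -> filterlim f (Rbar_locally m_infty) (locally l').
Proof. intros H <-. exact H. Qed.

Lemma Phi_is_lim_p : is_lim Phi p_infty sg. Proof. exact Phi_lim_p. Qed.
Lemma Phi_is_lim_m : is_lim Phi m_infty (- sg). Proof. exact Phi_lim_m. Qed.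

Lemma sqrtPI_pos : 0 < sqrt PI. Proof. apply sqrt_lt_R0, PI_RGT_0. Qed.

Lemma Pg_lim_p A m : 0 < A -> is_lim (Pg A m) p_infty (1/2).
Proof.
  intros HA. replace (1/2) with (/ sqrt PI * sg). 2:{ unfold sg. field. generalize sqrtPI_pos; lra. }
  unfold Pg. apply (is_lim_scal_l (fun x => Phi (kk A * (x - m))) (/ sqrt PI) p_infty sg).
  apply comp_p. apply kk_pos; auto. apply Phi_is_lim_p.
Qed.
Lemma Pg_lim_m A m : 0 < A -> is_lim (Pg A m) m_infty (-(1/2)).
Proof.
  intros HA. replace (-(1/2)) with (/ sqrt PI * (- sg)). 2:{ unfold sg. field. generalize sqrtPI_pos; lra. }
  unfold Pg. apply (is_lim_scal_l (fun x => Phi (kk A * (x - m))) (/ sqrt PI) m_infty (- sg)).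
  apply comp_m. apply kk_pos; auto. apply Phi_is_lim_m.
Qed.

Lemma gauss_int A m : 0 < A -> is_RInt_gen (gauss A m) (Rbar_locally m_infty) (Rbar_locally p_infty) 1.
Proof.
  intros HA. replace 1 with (1/2 - (-(1/2))) by field.
  apply antideriv_gen with (Pg A m).
  - intros; apply Pg_deriv; auto.
  - apply cont_gauss.
  - apply lim_fin_m with (-(1/2)); auto. apply Pg_lim_m; auto.
  - apply lim_fin_p with (1/2); auto. apply Pg_lim_p; auto.
Qed.

Lemma xg_eq A m x : 0 < A -> (x + m) * gauss A m x =
  (cc A / kk A) * ((kk A * (x - m)) * gfun (kk A * (x - m))) + (2 * m * cc A) * gfun (kk A * (x - m)).
Proof. intros HA. rewrite gauss_eq by auto. assert (H := kk_pos A HA). field. lra. Qed.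

Lemma xg_lim_p A m : 0 < A -> is_lim (fun x => (x + m) * gauss A m x) p_infty 0.
Proof.
  intros HA. eapply is_lim_ext. intros y. symmetry. apply xg_eq; auto.
  replace (Finite 0) with (Finite ((cc A / kk A) * 0 + (2 * m * cc A) * 0)) by (f_equal; ring).
  apply is_lim_plus'.
  - apply (is_lim_scal_l (fun x => (kk A * (x - m)) * gfun (kk A * (x - m))) _ p_infty 0).
    apply (comp_p (fun z => z * gfun z)). apply kk_pos; auto. apply xge_lim_p.
  - apply (is_lim_scal_l (fun x => gfun (kk A * (x - m))) _ p_infty 0).
    apply (comp_p gfun). apply kk_pos; auto. apply ge_lim_p.
Qed.
Lemma xg_lim_m A m : 0 < A -> is_lim (fun x => (x + m) * gauss A m x) m_infty 0.
Proof.
  intros HA. eapply is_lim_ext. intros y. symmetry. apply xg_eq; auto.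
  replace (Finite 0) with (Finite ((cc A / kk A) * 0 + (2 * m * cc A) * 0)) by (f_equal; ring).
  apply is_lim_plus'.
  - apply (is_lim_scal_l (fun x => (kk A * (x - m)) * gfun (kk A * (x - m))) _ m_infty 0).
    apply (comp_m (fun z => z * gfun z)). apply kk_pos; auto. apply xge_lim_m.
  - apply (is_lim_scal_l (fun x => gfun (kk A * (x - m))) _ m_infty 0).
    apply (comp_m gfun). apply kk_pos; auto. apply ge_lim_m.
Qed.

Lemma xg_deriv A m x : is_derive (fun x => (x + m) * gauss A m x) x
  (gauss A m x + (x + m) * (- A * (x - m) * gauss A m x)).
Proof. unfold gauss. auto_derive. auto. req. exp_norm. field. Qed.

Lemma dminus (f g : R -> R) x a b : is_derive f x a -> is_derive g x b -> is_derive (fun y => f y - g y) x (a - b).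
Proof. intros Ha Hb. exact (is_derive_minus f g x a b Ha Hb). Qed.
Lemma dplus (f g : R -> R) x a b : is_derive f x a -> is_derive g x b -> is_derive (fun y => f y + g y) x (a + b).
Proof. intros Ha Hb. exact (is_derive_plus f g x a b Ha Hb). Qed.

Lemma x2gauss_int A m : 0 < A ->
  is_RInt_gen (fun x => x ^ 2 * gauss A m x) (Rbar_locally m_infty) (Rbar_locally p_infty) (1 / A + m ^ 2).
Proof.
  intros HA.
  set (K := fun x => (1 / A + m ^ 2) * Pg A m x - (1 / A) * ((x + m) * gauss A m x)).
  replace (1 / A + m ^ 2) with (((1 / A + m ^ 2) * (1/2) - (1 / A) * 0) - ((1 / A + m ^ 2) * (-(1/2)) - (1 / A) * 0)) by (field; lra).
  apply antideriv_gen with K.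
  - intros x. unfold K. eapply deriv_eq.
    apply (dminus (fun x => (1 / A + m ^ 2) * Pg A m x) (fun x => (1 / A) * ((x + m) * gauss A m x))).
    apply is_derive_scal. apply Pg_deriv; auto.
    apply is_derive_scal. apply xg_deriv.
    req. field. lra.
  - intros x. apply (ex_derive_continuous (K:=R_AbsRing) (V:=R_NormedModule) (fun x => x ^ 2 * gauss A m x)).
    unfold gauss. auto_derive. auto.
  - apply lim_fin_m with ((1 / A + m ^ 2) * (-(1/2)) - (1 / A) * 0); auto. unfold K.
    apply is_lim_minus'. apply (is_lim_scal_l (Pg A m) _ m_infty (-(1/2))). apply Pg_lim_m; auto.
    apply (is_lim_scal_l (fun x => (x + m) * gauss A m x) _ m_infty 0). apply xg_lim_m; auto.
  - apply lim_fin_p with ((1 / A + m ^ 2) * (1/2) - (1 / A) * 0); auto. unfold K.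
    apply is_lim_minus'. apply (is_lim_scal_l (Pg A m) _ p_infty (1/2)). apply Pg_lim_p; auto.
    apply (is_lim_scal_l (fun x => (x + m) * gauss A m x) _ p_infty 0). apply xg_lim_p; auto.
Qed.

Lemma exp_ge1 y : 0 <= y -> 1 <= exp y.
Proof. intros. generalize (exp_ineq1_le y). lra. Qed.

Ltac side sigma a e :=
  let H1 := fresh in let H2 := fresh in let H3 := fresh in
  assert (H1 : 0 < a * sigma) by (apply Rmult_lt_0_compat; auto);
  assert (H2 : 0 <= e * e - 1) by nra;
  assert (H3 : 0 <= a * sigma * (e * e - 1)) by (apply Rmult_le_pos; lra);
  repeat split; apply Rgt_not_eq; nra.

Lemma a_deriv sigma a s : 0 < sigma -> 0 < a -> 0 <= s ->
  is_derive (a_of sigma a) s (2 * (1 - sigma ^ 2 * a_of sigma a s ^ 2)).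
Proof.
  intros Hs Ha Hs0. assert (He := exp_ge1 (2 * sigma * s) ltac:(nra)).
  unfold a_of, tanh, sinh, cosh. auto_derive; rewrite exp_Ropp; set (e := exp (2 * sigma * s)) in *.
  - assert (0 < / e) by (apply Rinv_0_lt_compat; lra).
    assert (/ e <= 1) by (rewrite <- Rinv_1; apply Rinv_le_contravar; lra).
    assert (Q : 0 <= (e + - / e) * / 2 * / ((e + / e) * / 2)).
    { apply Rmult_le_pos. lra. apply Rlt_le, Rinv_0_lt_compat. lra. }
    set (Q' := (e + - / e) * / 2 * / ((e + / e) * / 2)) in *.
    assert (0 <= a * sigma * Q') by (apply Rmult_le_pos; nra).
    repeat split; try apply Rgt_not_eq; try lra. apply Rmult_lt_0_compat; lra.
  - field. side sigma a e.
Qed.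

Lemma m_deriv sigma a m s : 0 < sigma -> 0 < a -> 0 <= s ->
  is_derive (m_of sigma a m) s (-2 * m_of sigma a m s / a_of sigma a s).
Proof.
  intros Hs Ha Hs0. assert (He := exp_ge1 (2 * sigma * s) ltac:(nra)).
  unfold m_of, a_of, tanh, sinh, cosh. auto_derive; rewrite exp_Ropp; set (e := exp (2 * sigma * s)) in *.
  - assert (0 < / e) by (apply Rinv_0_lt_compat; lra).
    assert (/ e <= 1) by (rewrite <- Rinv_1; apply Rinv_le_contravar; lra).
    apply Rgt_not_eq. assert (0 < a * sigma) by (apply Rmult_lt_0_compat; auto). nra.
  - field. side sigma a e.
Qed.

Lemma exp_diff1 p q : p <= q -> 0 <= exp (-p) - exp (-q) <= (q - p) * exp (-p).
Proof.
  intros H. replace (exp (-q)) with (exp (-p) * exp (-(q - p))) by (rewrite <- exp_plus; f_equal; ring).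
  assert (H1 := exp_ineq1_le (-(q - p))). assert (H2 : exp (-(q-p)) <= 1).
  { destruct (Req_dec q p). subst. replace (-(p-p)) with 0 by ring. rewrite exp_0; lra.
    apply Rlt_le. rewrite <- exp_0. apply exp_increasing. lra. }
  assert (0 < exp (-p)) by apply exp_pos. split; nra.
Qed.

Lemma exp_diff p q : Rabs (exp (-p) - exp (-q)) <= Rabs (p - q) * (exp (-p) + exp (-q)).
Proof.
  assert (0 < exp (-p)) by apply exp_pos. assert (0 < exp (-q)) by apply exp_pos.
  destruct (Rle_dec p q) as [Hpq|Hpq].
  - destruct (exp_diff1 p q Hpq). rewrite Rabs_right by lra. rewrite Rabs_left1 by lra. nra.
  - destruct (exp_diff1 q p ltac:(lra)). rewrite Rabs_left1 by lra. rewrite Rabs_right by lra. nra.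
Qed.

Definition dl A1 A2 m1 m2 := Rabs (A1 - A2) * (1 + m1 ^ 2) + A2 * Rabs (m2 - m1) * (1 + Rabs m1 + Rabs m2).

Lemma dl_nonneg A1 A2 m1 m2 : 0 < A2 -> 0 <= dl A1 A2 m1 m2.
Proof. intros. unfold dl. generalize (Rabs_pos (A1 - A2)) (Rabs_pos (m2 - m1)) (Rabs_pos m1) (Rabs_pos m2) (pow2_ge_0 m1). intros.
  apply Rplus_le_le_0_compat; apply Rmult_le_pos; try nra. Qed.

Lemma p_diff A1 A2 m1 m2 x : 0 < A2 ->
  Rabs (A1 / 2 * (x - m1) ^ 2 - A2 / 2 * (x - m2) ^ 2) <= dl A1 A2 m1 m2 * (1 + x ^ 2).
Proof.
  intros HA. unfold dl.
  replace (A1 / 2 * (x - m1) ^ 2 - A2 / 2 * (x - m2) ^ 2) with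
    ((A1 - A2) * ((x - m1) ^ 2 / 2) + A2 / 2 * ((m2 - m1) * (2 * x - m1 - m2))) by field.
  eapply Rle_trans. apply Rabs_triang.
  rewrite !Rabs_mult. rewrite (Rabs_right (A2 / 2)) by lra.
  rewrite (Rabs_right ((x - m1) ^ 2 / 2)) by (generalize (pow2_ge_0 (x - m1)); lra).
  assert (B1 : (x - m1) ^ 2 / 2 <= (1 + m1 ^ 2) * (1 + x ^ 2)).
  { generalize (pow2_ge_0 (x + m1)) (pow2_ge_0 (m1 * x)). intros. nra. }
  assert (B2 : Rabs (2 * x - m1 - m2) <= (1 + Rabs m1 + Rabs m2) * (1 + x ^ 2)).
  { assert (Rabs (2 * x - m1 - m2) <= 2 * Rabs x + Rabs m1 + Rabs m2).
    { replace (2 * x - m1 - m2) with (2 * x + (- m1) + (- m2)) by ring.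
      eapply Rle_trans. apply Rabs_triang. rewrite Rabs_Ropp.
      eapply Rle_trans. apply Rplus_le_compat_r. apply Rabs_triang. rewrite Rabs_Ropp, Rabs_mult, (Rabs_right 2) by lra. lra. }
    assert (2 * Rabs x <= 1 + x ^ 2).
    { rewrite <- pow2_abs. generalize (pow2_ge_0 (Rabs x - 1)). intros; nra. }
    generalize (Rabs_pos m1) (Rabs_pos m2) (pow2_ge_0 x). intros. nra. }
  generalize (Rabs_pos (A1 - A2)) (Rabs_pos (m2 - m1)) (Rabs_pos (2 * x - m1 - m2)) (pow2_ge_0 x).
  intros. 
  assert (C1 : Rabs (A1 - A2) * ((x - m1) ^ 2 / 2) <= Rabs (A1 - A2) * ((1 + m1 ^ 2) * (1 + x ^ 2))) by (apply Rmult_le_compat_l; lra).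
  assert (C2 : Rabs (m2 - m1) * Rabs (2 * x - m1 - m2) <= Rabs (m2 - m1) * ((1 + Rabs m1 + Rabs m2) * (1 + x ^ 2))) by (apply Rmult_le_compat_l; lra).
  assert (C3 : A2 / 2 * (Rabs (m2 - m1) * Rabs (2 * x - m1 - m2)) <= A2 * (Rabs (m2 - m1) * ((1 + Rabs m1 + Rabs m2) * (1 + x ^ 2)))).
  { assert (0 <= Rabs (m2 - m1) * Rabs (2 * x - m1 - m2)) by (apply Rmult_le_pos; auto). nra. }
  nra.
Qed.

Definition bnd A1 A2 m1 m2 x :=
  Rabs (cc A1 - cc A2) / cc A1 * gauss A1 m1 x
  + cc A2 * dl A1 A2 m1 m2 / cc A1 * ((1 + x ^ 2) * gauss A1 m1 x)
  + dl A1 A2 m1 m2 * ((1 + x ^ 2) * gauss A2 m2 x).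

Lemma gauss_diff A1 A2 m1 m2 x : 0 < A1 -> 0 < A2 ->
  Rabs (gauss A1 m1 x - gauss A2 m2 x) <= bnd A1 A2 m1 m2 x.
Proof.
  intros H1 H2. unfold bnd.
  assert (G : forall A m, gauss A m x = cc A * exp (- (A / 2 * (x - m) ^ 2))).
  { intros. unfold gauss, cc. f_equal. f_equal. ring. }
  rewrite !G.
  set (p1 := A1 / 2 * (x - m1) ^ 2). set (p2 := A2 / 2 * (x - m2) ^ 2).
  set (E1 := exp (- p1)). set (E2 := exp (- p2)).
  assert (c1p := cc_pos A1 H1). assert (c2p := cc_pos A2 H2).
  set (c1 := cc A1) in *. set (c2 := cc A2) in *.
  set (d := dl A1 A2 m1 m2).
  assert (Hd : Rabs (p1 - p2) <= d * (1 + x ^ 2)) by (apply p_diff; auto).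
  assert (He := exp_diff p1 p2). fold E1 E2 in He.
  assert (E1p : 0 < E1) by apply exp_pos. assert (E2p : 0 < E2) by apply exp_pos.
  replace (Rabs (c1 - c2) / c1 * (c1 * E1) + c2 * d / c1 * ((1 + x ^ 2) * (c1 * E1)) + d * ((1 + x ^ 2) * (c2 * E2)))
    with (Rabs (c1 - c2) * E1 + c2 * (d * (1 + x ^ 2) * (E1 + E2))) by (field; lra).
  replace (c1 * E1 - c2 * E2) with ((c1 - c2) * E1 + c2 * (E1 - E2)) by ring.
  eapply Rle_trans. apply Rabs_triang. rewrite !Rabs_mult.
  rewrite (Rabs_right E1) by lra. rewrite (Rabs_right c2) by lra.
  apply Rplus_le_compat_l. apply Rmult_le_compat_l. lra.
  eapply Rle_trans. apply He. apply Rmult_le_compat_r. lra. auto.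
Qed.

Notation MI := (Rbar_locally m_infty).
Notation PI_ := (Rbar_locally p_infty).

Lemma ig_plus (f g : R -> R) lf lg : is_RInt_gen f MI PI_ lf -> is_RInt_gen g MI PI_ lg ->
  is_RInt_gen (fun x => f x + g x) MI PI_ (lf + lg).
Proof. intros. exact (is_RInt_gen_plus f g lf lg H H0). Qed.
Lemma ig_scal (f : R -> R) k lf : is_RInt_gen f MI PI_ lf ->
  is_RInt_gen (fun x => k * f x) MI PI_ (k * lf).
Proof. intros. exact (is_RInt_gen_scal f k lf H). Qed.
Lemma ig_ext (f g : R -> R) l : (forall x, f x = g x) -> is_RInt_gen f MI PI_ l -> is_RInt_gen g MI PI_ l.
Proof. intros E H. apply (is_RInt_gen_ext f). apply prod_all; [apply Rbar_locally_filter..|]. intros; auto. auto. Qed.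

Definition Mg A m := 1 + (1 / A + m ^ 2).

Lemma opg_int A m : 0 < A -> is_RInt_gen (fun x => (1 + x ^ 2) * gauss A m x) MI PI_ (Mg A m).
Proof.
  intros HA. apply ig_ext with (fun x => gauss A m x + x ^ 2 * gauss A m x).
  intros; ring. apply ig_plus. apply gauss_int; auto. apply x2gauss_int; auto.
Qed.

Definition Dv A1 A2 m1 m2 :=
  Rabs (cc A1 - cc A2) / cc A1 * 1 + cc A2 * dl A1 A2 m1 m2 / cc A1 * Mg A1 m1 + dl A1 A2 m1 m2 * Mg A2 m2.

Lemma bnd_int A1 A2 m1 m2 : 0 < A1 -> 0 < A2 -> is_RInt_gen (bnd A1 A2 m1 m2) MI PI_ (Dv A1 A2 m1 m2).
Proof.
  intros H1 H2. unfold bnd, Dv. apply ig_plus. apply ig_plus.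
  apply ig_scal. apply gauss_int; auto.
  apply ig_scal. apply opg_int; auto.
  apply ig_scal. apply opg_int; auto.
Qed.

Lemma L1_bound A1 A2 m1 m2 : 0 < A1 -> 0 < A2 ->
  Rabs (RInt_gen (fun x => Rabs (gauss A1 m1 x - gauss A2 m2 x)) MI PI_) <= Dv A1 A2 m1 m2.
Proof.
  intros H1 H2.
  assert (Cf : forall x, continuous (fun x => Rabs (gauss A1 m1 x - gauss A2 m2 x)) x).
  { intros x. apply continuous_Rabs_comp.
    apply (ex_derive_continuous (K:=R_AbsRing) (V:=R_NormedModule) (fun x => gauss A1 m1 x - gauss A2 m2 x)).
    unfold gauss. auto_derive. auto. }
  assert (Cg : forall x, continuous (bnd A1 A2 m1 m2) x).
  { intros x. apply (ex_derive_continuous (K:=R_AbsRing) (V:=R_NormedModule) (bnd A1 A2 m1 m2)).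
    unfold bnd, gauss. auto_derive. auto. }
  assert (Hb := bnd_int A1 A2 m1 m2 H1 H2).
  assert (Ex : ex_RInt_gen (fun x => Rabs (gauss A1 m1 x - gauss A2 m2 x)) MI PI_).
  { apply (ex_RInt_gen_cmp _ (bnd A1 A2 m1 m2) (Dv A1 A2 m1 m2)); auto.
    intros x. split. apply Rabs_pos. apply gauss_diff; auto. }
  apply (RInt_gen_norm (V:=R_CompleteNormedModule) (Fa:=MI) (Fb:=PI_) (fun x => Rabs (gauss A1 m1 x - gauss A2 m2 x)) (bnd A1 A2 m1 m2) _ (Dv A1 A2 m1 m2)).
  all: try apply Rbar_locally_filter.
  - apply (Filter_prod _ _ _ (fun x => x < 0) (fun x => 0 < x)). exists 0; auto. exists 0; auto. simpl; intros; lra.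
  - apply prod_all; [apply Rbar_locally_filter..|]. intros ab x _.
    change (norm (Rabs (gauss A1 m1 x - gauss A2 m2 x))) with (Rabs (Rabs (gauss A1 m1 x - gauss A2 m2 x))).
    rewrite Rabs_Rabsolu. apply gauss_diff; auto.
  - apply (RInt_gen_correct (V:=R_CompleteNormedModule)). auto.
  - auto.
Qed.

Lemma inv_sqrt X : 0 < X -> / sqrt X = sqrt X / X.
Proof. intros. assert (H1 := sqrt_sqrt X (Rlt_le _ _ H)). assert (0 < sqrt X) by (apply sqrt_lt_R0; auto).
  field_simplify_eq; try lra. Qed.

Lemma gauss_dt (Af mf : R -> R) t dA dm x : is_derive Af t dA -> is_derive mf t dm -> 0 < Af t ->
  is_derive (fun s => gauss (Af s) (mf s) x) t
    (gauss (Af t) (mf t) x * (dA / (2 * Af t) - dA / 2 * (x - mf t) ^ 2 + Af t * dm * (x - mf t))).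
Proof.
  intros HA HM Hp. unfold gauss. auto_derive.
  - repeat split; try (eexists; eassumption). apply Rdiv_lt_0_compat; auto. generalize PI_RGT_0; lra.
  - replace (Derive (fun x0 => Af x0) t) with dA by (symmetry; apply is_derive_unique; auto).
    replace (Derive (fun x0 => mf x0) t) with dm by (symmetry; apply is_derive_unique; auto).
    unfold Rdiv. set (Y := Af t * / (2 * PI)).
    assert (HY : 0 < Y) by (unfold Y; apply Rdiv_lt_0_compat; auto; generalize PI_RGT_0; lra).
    rewrite (Rinv_mult 2 (sqrt Y)), (inv_sqrt Y HY).
    assert (0 < sqrt Y) by (apply sqrt_lt_R0; auto).
    req. exp_norm. unfold Y. field. split; try lra. generalize PI_RGT_0; lra.
Qed.

Lemma tanh0 : tanh 0 = 0.
Proof. unfold tanh, sinh, cosh. rewrite Ropp_0, exp_0. field. Qed.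
Lemma cosh0 : cosh 0 = 1.
Proof. unfold cosh. rewrite Ropp_0, exp_0. field. Qed.
Lemma sinh0 : sinh 0 = 0.
Proof. unfold sinh. rewrite Ropp_0, exp_0. field. Qed.

Lemma a_at0 sigma a : 0 < sigma -> a_of sigma a 0 = a.
Proof. intros. unfold a_of. replace (2 * sigma * 0) with 0 by ring. rewrite tanh0. field. lra. Qed.
Lemma m_at0 sigma a m : 0 < sigma -> 0 < a -> m_of sigma a m 0 = m.
Proof. intros. unfold m_of. replace (2 * sigma * 0) with 0 by ring. rewrite cosh0, sinh0. field.
  split; lra. Qed.

Lemma a_pos sigma a s : 0 < sigma -> 0 < a -> 0 <= s -> 0 < a_of sigma a s.
Proof.
  intros Hs Ha Hs0. assert (He := exp_ge1 (2 * sigma * s) ltac:(nra)).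
  unfold a_of, tanh, sinh, cosh. rewrite exp_Ropp. set (e := exp (2 * sigma * s)) in *.
  assert (0 < / e) by (apply Rinv_0_lt_compat; lra).
  assert (/ e <= 1) by (rewrite <- Rinv_1; apply Rinv_le_contravar; lra).
  assert (Q : 0 <= (e - / e) / 2 / ((e + / e) / 2)).
  { unfold Rdiv. apply Rmult_le_pos. lra. apply Rlt_le, Rinv_0_lt_compat. lra. }
  set (T := (e - / e) / 2 / ((e + / e) / 2)) in *.
  assert (0 < a * sigma) by (apply Rmult_lt_0_compat; auto).
  apply Rdiv_lt_0_compat. nra. apply Rmult_lt_0_compat; auto. nra.
Qed.

Lemma a_cont sigma a s : 0 < sigma -> 0 < a -> 0 <= s -> continuous (a_of sigma a) s.
Proof. intros. apply (ex_derive_continuous (K:=R_AbsRing) (V:=R_NormedModule)). eexists. apply a_deriv; auto. Qed.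
Lemma m_cont sigma a m s : 0 < sigma -> 0 < a -> 0 <= s -> continuous (m_of sigma a m) s.
Proof. intros. apply (ex_derive_continuous (K:=R_AbsRing) (V:=R_NormedModule)). eexists. apply m_deriv; auto. Qed.

Lemma cplus (f g : R -> R) x : continuous f x -> continuous g x -> continuous (fun y => f y + g y) x.
Proof. intros. exact (continuous_plus f g x H H0). Qed.
Lemma cmul (f g : R -> R) x : continuous f x -> continuous g x -> continuous (fun y => f y * g y) x.
Proof. intros. exact (continuous_mult f g x H H0). Qed.
Lemma cminus (f g : R -> R) x : continuous f x -> continuous g x -> continuous (fun y => f y - g y) x.
Proof. intros. exact (continuous_minus f g x H H0). Qed.
Lemma cinv (f : R -> R) x : continuous f x -> f x <> 0 -> continuous (fun y => / f y) x.
Proof. intros. exact (continuous_Rinv_comp f x H H0). Qed.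
Lemma cdiv (f g : R -> R) x : continuous f x -> continuous g x -> g x <> 0 -> continuous (fun y => f y / g y) x.
Proof. intros. unfold Rdiv. apply (cmul f (fun y => / g y)); auto. apply cinv; auto. Qed.
Lemma cconst (c : R) x : continuous (fun _ : R => c) x.
Proof. apply continuous_const. Qed.
Lemma cabs (f : R -> R) x : continuous f x -> continuous (fun y => Rabs (f y)) x.
Proof. intros. exact (continuous_Rabs_comp f x H). Qed.
Lemma csqrt (f : R -> R) x : continuous f x -> continuous (fun y => sqrt (f y)) x.
Proof. intros. exact (continuous_sqrt_comp f x H). Qed.
Lemma cpow2 (f : R -> R) x : continuous f x -> continuous (fun y => f y ^ 2) x.
Proof. intros. apply (continuous_ext (fun y => f y * (f y * 1))). intros; simpl; ring.
  apply cmul; auto. apply cmul; auto. apply cconst. Qed.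

Lemma gauss_d2 A m x : is_derive (Derive (gauss A m)) x ((A ^ 2 * (x - m) ^ 2 - A) * gauss A m x).
Proof.
  apply (is_derive_ext (fun y => - A * (y - m) * gauss A m y)).
  { intros; symmetry; apply is_derive_unique, gauss_dx. }
  unfold gauss. auto_derive. auto. req. exp_norm. field.
Qed.

Ltac cauto := repeat match goal with
 | |- continuous (fun _ => ?c) _ => apply cconst
 | |- continuous (fun y => @?f y + @?g y) _ => apply (cplus f g)
 | |- continuous (fun y => @?f y - @?g y) _ => apply (cminus f g)
 | |- continuous (fun y => @?f y / @?g y) _ => apply (cdiv f g)
 | |- continuous (fun y => @?f y * @?g y) _ => apply (cmul f g)
 | |- continuous (fun y => Rabs (@?f y)) _ => apply (cabs f)
 | |- continuous (fun y => sqrt (@?f y)) _ => apply (csqrt f)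
 | |- continuous (fun y => (@?f y) ^ 2) _ => apply (cpow2 f)
 end.

Definition Dfun sigma a m t s :=
  Dv (a_of sigma a s) (a_of sigma a t) (m_of sigma a m s) (m_of sigma a m t).

Lemma Dfun_cont sigma a m t : 0 < sigma -> 0 < a -> 0 <= t -> continuous (Dfun sigma a m t) t.
Proof.
  intros Hs Ha Ht. assert (HA := a_pos sigma a t Hs Ha Ht).
  assert (Hc := cc_pos _ HA). assert (HPI := PI_RGT_0).
  assert (Ca := a_cont sigma a t Hs Ha Ht). assert (Cm := m_cont sigma a m t Hs Ha Ht).
  unfold Dfun, Dv, dl, cc, Mg. unfold cc in Hc.
  set (A := a_of sigma a) in *. set (M := m_of sigma a m) in *. clearbody A M.
  cauto; try exact Ca; try exact Cm; apply Rgt_not_eq; lra.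
Qed.

Lemma Dfun_t sigma a m t : 0 < sigma -> 0 < a -> 0 <= t -> Dfun sigma a m t t = 0.
Proof.
  intros. unfold Dfun, Dv, dl. rewrite !Rminus_diag. rewrite Rabs_R0.
  assert (0 < cc (a_of sigma a t)) by (apply cc_pos, a_pos; auto). field. lra.
Qed.

Lemma L1_cont sigma a m t : 0 < sigma -> 0 < a -> 0 <= t ->
  filterlim (fun s => RInt_gen (fun x => Rabs (u_sol sigma a m s x - u_sol sigma a m t x))
                   (Rbar_locally m_infty) (Rbar_locally p_infty))
       (within (fun s => 0 <= s) (locally t)) (locally 0).
Proof.
  intros Hs Ha Ht.
  assert (HC := Dfun_cont sigma a m t Hs Ha Ht). assert (H0 := Dfun_t sigma a m t Hs Ha Ht).
  apply (filterlim_le_le (F := within (fun s => 0 <= s) (locally t))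
    (fun s => - Dfun sigma a m t s) _ (Dfun sigma a m t) (Finite 0)).
  - unfold within. apply filter_forall. intros s Hs0.
    assert (B := L1_bound (a_of sigma a s) (a_of sigma a t) (m_of sigma a m s) (m_of sigma a m t)
       (a_pos sigma a s Hs Ha Hs0) (a_pos sigma a t Hs Ha Ht)).
    fold (Dfun sigma a m t s) in B. unfold u_sol.
    set (I := RInt_gen _ _ _) in *.
    generalize (Rle_abs I) (Rle_abs (- I)). rewrite Rabs_Ropp. intros; lra.
  - eapply filterlim_filter_le_1. apply filter_le_within.
    change (filterlim (fun s => - Dfun sigma a m t s) (locally t) (locally 0)).
    replace 0 with (- Dfun sigma a m t t) by (rewrite H0; ring).
    apply (continuous_opp (Dfun sigma a m t)). exact HC.
  - eapply filterlim_filter_le_1. apply filter_le_within.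
    change (filterlim (Dfun sigma a m t) (locally t) (locally 0)).
    rewrite <- H0. exact HC.
Qed.

Theorem proposition2p2 (sigma a m : R) (Hsigma : 0 < sigma) (Ha : 0 < a) :
  let u := u_sol sigma a m in
  (forall x, u 0 x = gauss a m x) /\
  (forall t, 0 < t ->
     exists M : R,
       is_RInt_gen (fun y => y ^ 2 * u t y)
         (Rbar_locally m_infty) (Rbar_locally p_infty) M /\
       forall x,
         ex_derive_n (u t) 2 x /\
         is_derive (fun s => u s x) t
           (sigma ^ 2 * Derive_n (u t) 2 x + (- x ^ 2 + M) * u t x)) /\
  (forall t, 0 <= t ->
     ex_RInt_gen (fun x => Rabs (u t x)) (Rbar_locally m_infty) (Rbar_locally p_infty)) /\
  (forall t, 0 <= t ->
     filterlim
       (fun s => RInt_gen (fun x => Rabs (u s x - u t x))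
                   (Rbar_locally m_infty) (Rbar_locally p_infty))
       (within (fun s => 0 <= s) (locally t)) (locally 0)) /\
  (forall t, 0 < t ->
     ex_RInt_gen (fun x => x ^ 2 * Rabs (u t x)) (Rbar_locally m_infty) (Rbar_locally p_infty)) /\
  (forall t1 t2, 0 < t1 -> t1 <= t2 ->
     ex_RInt (fun t => RInt_gen (fun x => (1 + x ^ 2) * Rabs (u t x))
                         (Rbar_locally m_infty) (Rbar_locally p_infty)) t1 t2).
Proof.
  intros u. unfold u. clear u.
  assert (AP : forall t, 0 <= t -> 0 < a_of sigma a t) by (intros; apply a_pos; auto).
  split; [|split; [|split; [|split; [|split]]]].
  - intros x. unfold u_sol. rewrite a_at0, m_at0; auto.
  - intros t Ht. assert (HA := AP t (Rlt_le _ _ Ht)).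
    set (A := a_of sigma a t). set (mu := m_of sigma a m t).
    exists (1 / A + mu ^ 2). split.
    { exact (x2gauss_int A mu HA). }
    intros x. split.
    { change (ex_derive (Derive (gauss A mu)) x). eexists. apply gauss_d2. }
    change (Derive_n (u_sol sigma a m t) 2 x) with (Derive (Derive (gauss A mu)) x).
    rewrite (is_derive_unique _ _ _ (gauss_d2 A mu x)).
    change (is_derive (fun s => gauss (a_of sigma a s) (m_of sigma a m s) x) t
      (sigma ^ 2 * ((A ^ 2 * (x - mu) ^ 2 - A) * gauss A mu x) + (- x ^ 2 + (1 / A + mu ^ 2)) * gauss A mu x)).
    eapply deriv_eq.
    + apply gauss_dt. apply a_deriv; auto; lra. apply m_deriv; auto; lra. auto.
    + fold A mu. req. field. apply Rgt_not_eq. exact HA.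
  - intros t Ht. exists 1. apply ig_ext with (gauss (a_of sigma a t) (m_of sigma a m t)).
    + intros x. unfold u_sol. rewrite Rabs_right; auto. apply Rle_ge, Rlt_le, gauss_pos; auto.
    + apply gauss_int; auto.
  - intros t Ht. apply L1_cont; auto.
  - intros t Ht. exists (1 / a_of sigma a t + m_of sigma a m t ^ 2).
    apply ig_ext with (fun x => x ^ 2 * gauss (a_of sigma a t) (m_of sigma a m t) x).
    + intros x. unfold u_sol. rewrite Rabs_right; auto. apply Rle_ge, Rlt_le, gauss_pos; auto. apply AP; lra.
    + apply x2gauss_int; auto. apply AP; lra.
  - intros t1 t2 Ht1 Ht12.
    apply (ex_RInt_ext (V:=R_CompleteNormedModule) (fun t => Mg (a_of sigma a t) (m_of sigma a m t))).
    + intros t Htt. rewrite Rmin_left, Rmax_right in Htt by lra.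
      symmetry. apply (is_RInt_gen_unique (V:=R_CompleteNormedModule) (Fa:=MI) (Fb:=PI_)).
      apply ig_ext with (fun x => (1 + x ^ 2) * gauss (a_of sigma a t) (m_of sigma a m t) x).
      * intros x. unfold u_sol. rewrite Rabs_right; auto. apply Rle_ge, Rlt_le, gauss_pos; auto. apply AP; lra.
      * apply opg_int. apply AP; lra.
    + apply (ex_RInt_continuous (V:=R_CompleteNormedModule)). intros z Hz.
      rewrite Rmin_left, Rmax_right in Hz by lra.
      assert (Ca := a_cont sigma a z Hsigma Ha ltac:(lra)). assert (Cm := m_cont sigma a m z Hsigma Ha ltac:(lra)).
      assert (HAz := AP z ltac:(lra)).
      unfold Mg. set (A := a_of sigma a) in *. set (M := m_of sigma a m) in *. clearbody A M.
      cauto; try exact Ca; try exact Cm. apply Rgt_not_eq; lra.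
Qed.
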